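(* Let $T$ be a rooted tree with root $r$ and nonnegative node weights $p(\cdot)$, and let $H(T,r)$ be the weighted heavy path of $T$ containing $r$. Then a node $u\in H(T,r)$ minimizing $|2p(T_u)-p(T)|$ over $u\in H(T,r)$ is a middle point of $T$, i.e., it also minimizes $|2p(T_u)-p(T)|$ over all nodes $u$ of $T$.
   Context: Edges of $T$ are directed from parent to child. For a node $u$, $T_u$ is the subtree of $T$ rooted at $u$ (consisting of $u$ and all its descendants), and for a set $S$ of nodes $p(S)=\sum_{v\in S}p(v)$; $p(T)$ is the total weight of $T$. For each internal node $u$, choose a child $v$ of $u$ with the largest subtree weight $p(T_v)$ (ties broken arbitrarily); the edge $(u,v)$ is called heavy and the other outgoing edges of $u$ are light. A weighted heavy path is a maximal path formed by concatenating heavy edges; $H(T,r)$ is the one containing the root, i.e., the path obtained starting from $r$ and repeatedly following the heavy edge until reaching a leaf. *)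

(* Defs.v *)
From HB Require Import structures.
From mathcomp Require Import all_boot all_order all_algebra.
Set Implicit Arguments. Unset Strict Implicit. Unset Printing Implicit Defensive.
Import Order.TTheory GRing.Theory Num.Theory.
Local Open Scope ring_scope.

(* Edges are directed from parent to child. *)
Definition rooted_tree (V : finType) (r : V) (par : V -> V) : Prop :=
  par r = r /\ forall v : V, exists k : nat, iter k par v = r.

Definition child (V : finType) (par : V -> V) : rel V :=
  fun u v => (par v == u) && (v != u).

Definition subtree (V : finType) (par : V -> V) (u : V) : {set V} :=
  [set v | connect (child par) u v].

Definition wt (R : numDomainType) (V : finType) (p : V -> R) (S : {set V}) : R :=
  \sum_(v in S) p v.

Definition internal (V : finType) (par : V -> V) (u : V) : bool :=
  [exists v, child par u v].

Definition heavy_choice (R : numDomainType) (V : finType) (par : V -> V)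
    (p : V -> R) (h : V -> V) : Prop :=
  forall u, internal par u ->
    child par u (h u) /\
    forall c, child par u c -> wt p (subtree par c) <= wt p (subtree par (h u)).

Definition on_heavy_path (V : finType) (par : V -> V) (h : V -> V) (r v : V) : Prop :=
  exists k : nat, iter k h r = v /\ forall j : nat, (j < k)%N -> internal par (iter j h r).

(* Main.v *)
Require Import Defs.
From HB Require Import structures.
From mathcomp Require Import all_boot all_order all_algebra.
From mathcomp Require Import lra.
Set Implicit Arguments. Unset Strict Implicit.
Import Order.TTheory GRing.Theory Num.Theory.
Local Open Scope ring_scope.

Lemma ineq_aux (R : realDomainType) (a b e W : R) : 0 <= e -> e <= b -> b <= a ->
  a + b <= W -> `|2*a - W| <= `|2*e - W|.
Proof. move=> *. rewrite (ler0_norm (x:=2*e-W)); last by lra.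
rewrite ler_norml; apply/andP; split; lra. Qed.

Lemma L_anc (V : finType) (par : V -> V) a b :
  connect (child par) a b -> exists m, iter m par b = a.
Proof.
move/connectP=> [s pth ->]; elim: s a pth => [|x s IH] a /=; first by exists 0%N.
move/andP=> [/andP[/eqP pa _] pth]; have [m Hm] := IH x pth.
by exists m.+1; rewrite iterS Hm pa.
Qed.

Lemma L_fix (V : finType) (r : V) (par : V -> V) : par r = r -> forall j, iter j par r = r.
Proof. by move=> pr; elim=> [|j IH] //=; rewrite IH pr. Qed.

Lemma L_cyc (V : finType) (r : V) (par : V -> V) n d :
  rooted_tree r par -> iter n.+1 par d = d -> d = r.
Proof.
move=> [pr hr] Hd.
have per : forall q, iter (q * n.+1) par d = d.
  elim=> [|q IH]; first by rewrite mul0n.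
  by rewrite mulSn iterD IH Hd.
have [k Hk] := hr d.
by rewrite -(per k) mulnC mulSn addnC iterD Hk L_fix.
Qed.

Lemma L_aux (V : finType) (r : V) (par : V -> V) u c d x m m' :
  rooted_tree r par -> child par u c -> child par u d ->
  iter m par x = c -> iter m' par x = d -> (m <= m')%N -> c = d.
Proof.
move=> rt /andP[/eqP pc cu] /andP[/eqP pd du] Hm Hm' le.
have E : iter (m' - m) par c = d by rewrite -Hm -iterD subnK.
move: E; case E2: (m' - m)%N => [|n] E; first by [].
rewrite iterSr pc in E.
have Hu : iter n.+1 par u = u by rewrite iterS E pd.
have ur := L_cyc rt Hu.
move: E; rewrite ur L_fix; last by case: rt.
by move=> E; rewrite -E -ur eqxx in du.
Qed.

Lemma L_disj (V : finType) (r : V) (par : V -> V) u c d x :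
  rooted_tree r par -> child par u c -> child par u d -> c != d ->
  x \in subtree par c -> x \in subtree par d -> False.
Proof.
move=> rt hc hd cd; rewrite !inE => /L_anc [m Hm] /L_anc [m' Hm'].
case: (leqP m m') => le.
  by move: cd; rewrite (L_aux rt hc hd Hm Hm' le) eqxx.
by move: cd; rewrite (L_aux rt hd hc Hm' Hm (ltnW le)) eqxx.
Qed.

Lemma L_notin (V : finType) (r : V) (par : V -> V) u c :
  rooted_tree r par -> child par u c -> u \notin subtree par c.
Proof.
move=> rt hc; apply/negP; rewrite inE => /L_anc [m Hm].
move: (hc) => /andP[/eqP pc cu].
have Hu : iter m.+1 par u = u by rewrite iterS Hm pc.
have ur := L_cyc rt Hu.
move: Hm; rewrite ur L_fix; last by case: rt.
by move=> E; rewrite -E -ur eqxx in cu.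
Qed.

Lemma L_decomp (V : finType) (par : V -> V) u v :
  connect (child par) u v -> v != u ->
  exists2 c, child par u c & v \in subtree par c.
Proof.
move/connectP=> [[|x s] /= pth ->]; first by rewrite eqxx.
move: pth => /andP[hx pth] _; exists x => //.
by rewrite inE; apply/connectP; exists s.
Qed.

Lemma L_root (V : finType) (r : V) (par : V -> V) :
  rooted_tree r par -> forall v, v \in subtree par r.
Proof.
move=> [pr hr] v; have [k Hk] := hr v; rewrite inE.
elim: k v Hk => [|k IH] v Hk; first by move: Hk => /= ->; rewrite connect0.
rewrite iterSr in Hk; have H := IH _ Hk.
case: (eqVneq (par v) v) => e; first by rewrite -e.
apply: connect_trans H (connect1 _); by rewrite /child eqxx eq_sym e.
Qed.

Lemma L_sub (V : finType) (par : V -> V) a b :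
  b \in subtree par a -> subtree par b \subset subtree par a.
Proof.
rewrite inE => H; apply/subsetP => x; rewrite !inE => H2.
exact: connect_trans H H2.
Qed.

Lemma wsub (R : numDomainType) (V : finType) (p : V -> R) (A B : {set V}) :
  (forall v, 0 <= p v) -> A \subset B -> wt p A <= wt p B.
Proof.
move=> p0 AB; rewrite /wt [X in _ <= X](big_setID A) /= (setIidPr AB) lerDl.
by apply: sumr_ge0 => i _.
Qed.

Lemma wdisj (R : numDomainType) (V : finType) (p : V -> R) (A B U : {set V}) :
  (forall v, 0 <= p v) -> A \subset U -> B \subset U ->
  (forall x, x \in A -> x \in B -> False) -> wt p A + wt p B <= wt p U.
Proof.
move=> p0 AU BU dis; rewrite /wt [X in _ <= X](big_setID A) /= (setIidPr AU) lerD2l.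
apply: (wsub p0); apply/subsetP => x xB; rewrite inE (subsetP BU) // andbT.
by apply/negP => xA; apply: (dis x).
Qed.

Theorem theorem5 (R : realDomainType) (V : finType) (r : V) (par : V -> V)
    (p : V -> R) (h : V -> V) :
  rooted_tree r par ->
  (forall v, 0 <= p v) ->
  heavy_choice par p h ->
  forall u : V, on_heavy_path par h r u ->
  (forall w : V, on_heavy_path par h r w ->
     `|2 * wt p (subtree par u) - wt p [set: V]| <=
     `|2 * wt p (subtree par w) - wt p [set: V]|) ->
  forall v : V,
     `|2 * wt p (subtree par u) - wt p [set: V]| <=
     `|2 * wt p (subtree par v) - wt p [set: V]|.
Proof.
move=> rt p0 hv u _ Hmin v.
set W := wt p [set: V].
have claim : forall n k, (forall j, (j < k)%N -> internal par (iter j h r)) ->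
  (#|subtree par (iter k h r)| <= n)%N ->
  forall v, v \in subtree par (iter k h r) ->
  exists w, on_heavy_path par h r w /\
    `|2 * wt p (subtree par w) - W| <= `|2 * wt p (subtree par v) - W|.
  elim=> [|n IH] k Hk Hc x Hx.
    by move: Hc; rewrite leqn0 => /eqP/cards0_eq E; rewrite E inE in Hx.
  case: (eqVneq x (iter k h r)) => ex.
    by exists x; split => //; exists k; split.
  have Hx' : connect (child par) (iter k h r) x by move: Hx; rewrite inE.
  have [c hc xc] := L_decomp Hx' ex.
  have hint : internal par (iter k h r) by apply/existsP; exists c.
  have [hch hmax] := hv _ hint.
  have Hk1 : forall j, (j < k.+1)%N -> internal par (iter j h r).
    move=> j; rewrite ltnS leq_eqVlt => /orP[/eqP -> //|]; exact: Hk.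
  case: (eqVneq c (h (iter k h r))) => ec.
    apply: (IH k.+1 Hk1) => //=.
      rewrite -ltnS; apply: leq_trans Hc; apply: proper_card.
      rewrite properE; apply/andP; split.
        by apply: L_sub; rewrite inE connect1.
      apply/subsetPn; exists (iter k h r); first by rewrite inE connect0.
      exact: L_notin rt hch.
    by rewrite -ec.
  exists (iter k.+1 h r); split; first by exists k.+1; split.
  rewrite iterS.
  apply: (ineq_aux (b := wt p (subtree par c))).
  - by apply: sumr_ge0.
  - by apply: (wsub p0); apply: L_sub.
  - exact: hmax.
  - apply: (wdisj p0); try exact: subsetT.
    move=> y y1 y2; apply: (L_disj rt hch hc _ y1 y2); by rewrite eq_sym.
have [w [hw le]] := claim #|V| 0%N (fun j (jl : (j < 0)%N) => False_ind _ (notF jl))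
  (max_card _) v (L_root rt v).
exact: le_trans (Hmin w hw) le.
Qed.
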